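(* Every uncrossable family of cycles in a graph is strongly uncrossable.
   Context: Graphs may be directed or undirected; cycles are simple. For paths/cycles, $P+Q$ denotes the union (multiset sum) of edge sets and $C-P$ the edge set of $C$ minus that of $P$. A family $\mathcal{C}$ of cycles is uncrossable if for all $C_1,C_2\in\mathcal{C}$ and every path $P_2$ in $C_2$ sharing only its two endpoints with $C_1$, there is a path $P_1$ in $C_1$ between these endpoints with $P_1+P_2\in\mathcal{C}$ and such that $(C_1-P_1)+(C_2-P_2)$ contains a cycle of $\mathcal{C}$. The family $\mathcal{C}$ is strongly uncrossable if for all $C_1,C_2\in\mathcal{C}$ and any two vertices $v,w$ lying on both $C_1$ and $C_2$, there are a $v$-$w$-path $P_1$ in $C_1$ and a $v$-$w$-path $P_2$ in $C_2$ (subpaths of the cycles with endpoints $v,w$) such that both $P_1+P_2$ and $(C_1-P_1)+(C_2-P_2)$ contain (the edge set of) a cycle in $\mathcal{C}$. *)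

(* Defs.v *)
From mathcomp Require Import all_boot.
Set Implicit Arguments. Unset Strict Implicit. Unset Printing Implicit Defensive.

(* If [dir] is true the graph is
   directed (e goes from src e to tgt e), otherwise it is undirected and the
   orientation given by src/tgt is irrelevant. Paths and cycles are simple and
   are identified with their edge sets. *)
Section Graphs.
Variables (V E : finType) (dir : bool) (src tgt : E -> V).

Definition joins (e : E) (x y : V) : bool :=
  ((src e == x) && (tgt e == y)) || (~~ dir && (src e == y) && (tgt e == x)).

(* walk starting at x, traversing edges es, visiting vertices vs (after x) *)
Definition is_walk (x : V) (es : seq E) (vs : seq V) : bool :=
  (size vs == size es) &&
  all (fun t => joins t.1 t.2.1 t.2.2) (zip es (zip (x :: vs) vs)).

Definition path_from (P : {set E}) (x y : V) : Prop :=
  exists (es : seq E) (vs : seq V),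
    [/\ is_walk x es vs, uniq (x :: vs), uniq es, last x vs = y
      & P = [set e in es]].

Definition path_between (P : {set E}) (x y : V) : Prop :=
  path_from P x y \/ path_from P y x.

Definition is_cycle (C : {set E}) : Prop :=
  exists (x : V) (es : seq E) (vs : seq V),
    [/\ is_walk x es vs, 0 < size es, uniq vs && uniq es, last x vs = x
      & C = [set e in es]].

Definition vset (F : {set E}) : {set V} :=
  [set v | [exists e in F, (src e == v) || (tgt e == v)]].

Definition cycle_family (Fam : {set {set E}}) : Prop :=
  forall C, C \in Fam -> is_cycle C.

(* P1 + P2 (multiset sum) is a cycle of Fam: disjoint with union in Fam.
   A multiset contains (the edge set of) a cycle D iff D is included in its
   support, here the union. *)
Definition uncrossable (Fam : {set {set E}}) : Prop :=
  forall C1 C2, C1 \in Fam -> C2 \in Fam ->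
  forall (a b : V) (P2 : {set E}),
    a != b -> P2 \subset C2 -> path_between P2 a b ->
    vset P2 :&: vset C1 = [set a; b] ->
    exists P1 : {set E},
      [/\ P1 \subset C1, path_between P1 a b,
          [disjoint P1 & P2], (P1 :|: P2) \in Fam
        & exists2 D, D \in Fam & D \subset (C1 :\: P1) :|: (C2 :\: P2)].

Definition strongly_uncrossable (Fam : {set {set E}}) : Prop :=
  forall C1 C2, C1 \in Fam -> C2 \in Fam ->
  forall v w : V, v != w ->
    v \in vset C1 -> w \in vset C1 -> v \in vset C2 -> w \in vset C2 ->
    exists P1 P2 : {set E},
      [/\ P1 \subset C1 /\ path_between P1 v w,
          P2 \subset C2 /\ path_between P2 v w,
          (exists2 D, D \in Fam & D \subset P1 :|: P2)
        & exists2 D, D \in Fam & D \subset (C1 :\: P1) :|: (C2 :\: P2)].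

End Graphs.

(* Main.v *)
Require Import Defs.
From mathcomp Require Import all_boot.
Set Implicit Arguments. Unset Strict Implicit. Unset Printing Implicit Defensive.

Section H.
Variables (V E : finType) (dir : bool) (src tgt : E -> V).
Local Notation joins := (joins dir src tgt).
Local Notation is_walk := (is_walk dir src tgt).
Local Notation path_from := (path_from dir src tgt).
Local Notation path_between := (path_between dir src tgt).
Local Notation is_cycle := (is_cycle dir src tgt).
Local Notation vset := (vset src tgt).

Definition inc e z := (src e == z) || (tgt e == z).

Lemma joinsE e x y : joins e x y -> (src e = x /\ tgt e = y) \/ (src e = y /\ tgt e = x).
Proof.
rewrite /Defs.joins => /orP [/andP[/eqP-> /eqP->]|/andP[/andP[_ /eqP->] /eqP->]]; by [left|right].
Qed.

Lemma joins_inc e x y z : joins e x y -> inc e z = (z == x) || (z == y).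
Proof.
rewrite /inc; by move=> /joinsE [[-> ->]|[-> ->]]; rewrite ?(eq_sym x) ?(eq_sym y) // orbC.
Qed.

Lemma joins_r e x y y' : joins e x y -> joins e x y' -> y = y'.
Proof. by move=> /joinsE [[h1 h2]|[h1 h2]] /joinsE [[h3 h4]|[h3 h4]]; congruence. Qed.

Lemma joins_l e x x' y : joins e x y -> joins e x' y -> x = x'.
Proof. by move=> /joinsE [[h1 h2]|[h1 h2]] /joinsE [[h3 h4]|[h3 h4]]; congruence. Qed.

Lemma joins_sym e x y : ~~ dir -> joins e x y -> joins e y x.
Proof.
rewrite /Defs.joins => nd /orP[/andP[a b]| /andP[/andP[_ a] b]]; apply/orP;
  [right; rewrite nd a b | left; rewrite a b] => //.
Qed.

Lemma joins_dir e x y : dir -> joins e x y -> src e = x.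
Proof. by rewrite /Defs.joins => -> /orP[/andP[/eqP-> _]|]. Qed.

Lemma walk_nil x vs : is_walk x [::] vs = (vs == [::]).
Proof. by rewrite /Defs.is_walk; case: vs. Qed.

Lemma walk_cons x e es u vs :
  is_walk x (e :: es) (u :: vs) = joins e x u && is_walk u es vs.
Proof. by rewrite /Defs.is_walk /= eqSS andbCA. Qed.

Lemma walk_size x es vs : is_walk x es vs -> size vs = size es.
Proof. by case/andP=> /eqP. Qed.

Lemma walk_cat x es1 es2 vs1 vs2 : size vs1 = size es1 ->
  is_walk x (es1 ++ es2) (vs1 ++ vs2) =
  is_walk x es1 vs1 && is_walk (last x vs1) es2 vs2.
Proof.
elim: es1 x vs1 => [|e es1 IH] x [|u vs1] // H.
by rewrite /= !walk_cons IH ?andbA //; case: H.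
Qed.

Lemma walk_rcons x es e vs u : size vs = size es ->
  is_walk x (rcons es e) (rcons vs u) = is_walk x es vs && joins e (last x vs) u.
Proof. by move=> H; rewrite -!cats1 walk_cat // walk_cons walk_nil andbT. Qed.

Lemma walk_rconsE x es e vs : is_walk x (rcons es e) vs ->
  exists vs' u, [/\ vs = rcons vs' u, is_walk x es vs' & joins e (last x vs') u].
Proof.
move=> W; have := walk_size W; rewrite size_rcons.
case/lastP: vs W => [//|vs' u] W; rewrite size_rcons => -[Hs].
by move: W; rewrite walk_rcons // => /andP[W J]; exists vs', u.
Qed.

Lemma walk_split x es vs z : is_walk x es vs -> z \in x :: vs ->
  exists es1 es2 vs1 vs2, [/\ es = es1 ++ es2, vs = vs1 ++ vs2,
    is_walk x es1 vs1, is_walk z es2 vs2 & last x vs1 = z].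
Proof.
elim: es x vs => [|e es IH] x [|u vs] //.
- rewrite inE => _ /eqP->; exists [::], [::], [::], [::]; split => //.
- rewrite walk_cons => /andP[J W]; rewrite inE => /orP[/eqP->|Hz].
    by exists [::], (e :: es), [::], (u :: vs); rewrite walk_nil walk_cons J W.
  have [es1 [es2 [vs1 [vs2 [-> -> W1 W2 L]]]]] := IH _ _ W Hz.
  by exists (e :: es1), es2, (u :: vs1), vs2; rewrite walk_cons J W1.
Qed.

Lemma in_vset (F : {set E}) z : (z \in vset F) = [exists e in F, inc e z].
Proof. by rewrite inE. Qed.

Lemma vset_seq es z : (z \in vset [set e in es]) = has (inc^~ z) es.
Proof.
rewrite in_vset; apply/existsP/hasP => [[e /andP[]]|[e He Hi]].
  by rewrite inE => He Hi; exists e.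
by exists e; rewrite inE He.
Qed.

Lemma vset_walk x es vs z : is_walk x es vs -> es != [::] ->
  (z \in vset [set e in es]) = (z \in x :: vs).
Proof.
rewrite vset_seq; elim: es x vs => [|e es IH] x [|u vs] //.
rewrite walk_cons => /andP[J W] _ /=; rewrite (joins_inc z J).
case: es IH W => [|e' es] IH W.
  by move: W; rewrite walk_nil => /eqP-> /=; rewrite !inE orbF.
rewrite (IH u vs W) // !inE; by case: (z == x); case: (z == u).
Qed.

Lemma inc_notin y es vs z : is_walk y es vs -> z \notin y :: vs -> ~~ has (inc^~ z) es.
Proof.
elim: es y vs => [|e es IH] y [|u vs] //.
rewrite walk_cons => /andP[J W]; rewrite !inE negb_or => /andP[H1 H2] /=.
by rewrite (joins_inc z J) negb_or !negb_or H1 /= (IH _ _ W) // andbT; case/norP: H2.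
Qed.


Lemma last_rev_belast (x : V) vs : last (last x vs) (rev (belast x vs)) = x.
Proof.
have H : last x vs :: rev (belast x vs) = rev (x :: vs) by rewrite [x :: vs]lastI rev_rcons.
have := congr1 (last x) H; rewrite /= => ->.
by rewrite rev_cons last_rcons.
Qed.

Lemma walk_rev x es vs : ~~ dir -> is_walk x es vs ->
  is_walk (last x vs) (rev es) (rev (belast x vs)).
Proof.
move=> nd; elim: es x vs => [|e es IH] x [|u vs] //.
rewrite walk_cons => /andP[J W] /=.
rewrite rev_cons rev_cons walk_rcons; last by rewrite size_rev size_belast size_rev (walk_size W).
by rewrite (IH _ _ W) last_rev_belast joins_sym.
Qed.

Lemma uniq_rev_walk (x : V) vs : uniq (last x vs :: rev (belast x vs)) = uniq (x :: vs).
Proof. by rewrite -rev_rcons -lastI rev_uniq. Qed.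

Lemma inc_start x e0 es vs e : is_walk x (e0 :: es) vs -> uniq (x :: vs) ->
  e \in e0 :: es -> inc e x -> e = e0.
Proof.
case: vs => [//|u vs]; rewrite walk_cons => /andP[J W] /andP[Hx _].
rewrite inE => /orP[/eqP//|He] Hi.
by have /hasP := inc_notin W Hx; case; exists e.
Qed.

Lemma inc_end x es el vs e : is_walk x (rcons es el) vs -> uniq (x :: vs) ->
  e \in rcons es el -> inc e (last x vs) -> e = el.
Proof.
move=> /walk_rconsE [vs' [u [-> W J]]]; rewrite last_rcons -rcons_cons rcons_uniq.
case/andP=> Hu _; rewrite mem_rcons inE => /orP[/eqP//|He] Hi.
by have /hasP := inc_notin W Hu; case; exists e.
Qed.

Lemma dir_first_last x f fs us y bs bl ws : dir -> is_walk x (f :: fs) us ->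
  is_walk y (rcons bs bl) ws -> uniq (y :: ws) -> last y ws = x -> f != bl.
Proof.
move=> d; case: us => [//|u us]; rewrite walk_cons => /andP[J _].
move=> /walk_rconsE [ws' [b [-> W J']]]; rewrite last_rcons -rcons_cons rcons_uniq => /andP[Hb _] Hbx.
apply/eqP => Hf; subst f b.
have := joins_dir d J; rewrite (joins_dir d J') => Hl.
by move: Hb; rewrite -Hl mem_last.
Qed.

Lemma path_ends P x y : path_from P x y -> x != y -> x \in vset P /\ y \in vset P.
Proof.
move=> [es [vs [W U Ues L ->]]] Hxy.
have Hne : es != [::].
  by apply/eqP => Hes; move: W Hxy; rewrite Hes walk_nil => /eqP Hv; rewrite -L Hv eqxx.
by rewrite !(vset_walk _ W Hne) -L mem_last mem_head.
Qed.

Lemma pb_ends P x y : path_between P x y -> x != y -> x \in vset P /\ y \in vset P.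
Proof.
case=> H Hxy; first exact: path_ends H Hxy.
by have [] := path_ends H; rewrite // eq_sym.
Qed.

Lemma pb_sym P x y : path_between P x y -> path_between P y x.
Proof. by case; [right|left]. Qed.

Lemma vset_mono (A B : {set E}) : A \subset B -> vset A \subset vset B.
Proof.
move=> /subsetP sAB; apply/subsetP => z; rewrite !in_vset => /existsP[e /andP[He Hi]].
by apply/existsP; exists e; rewrite sAB.
Qed.

Lemma vsetU (A B : {set E}) : vset (A :|: B) = vset A :|: vset B.
Proof.
apply/setP => z; rewrite in_setU !in_vset; apply/existsP/orP.
  by case=> e /andP[]; rewrite inE => /orP[]He Hi; [left|right]; apply/existsP; exists e; rewrite He.
by case=> /existsP[e /andP[He Hi]]; exists e; rewrite inE He ?orbT.
Qed.

Lemma vset_inc (F : {set E}) e z : e \in F -> inc e z -> z \in vset F.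
Proof. by move=> He Hi; rewrite in_vset; apply/existsP; exists e; rewrite He. Qed.

Lemma path_split P x y z : path_from P x y -> z \in vset P ->
  exists P1 P2, [/\ path_from P1 x z, path_from P2 z y, P = P1 :|: P2 & [disjoint P1 & P2]].
Proof.
move=> [es [vs [W U Ues L ->]]] Hz.
have Hne : es != [::] by apply/eqP => Hes; move: Hz; rewrite Hes vset_seq.
move: Hz; rewrite (vset_walk _ W Hne) => Hz.
have [es1 [es2 [vs1 [vs2 [Ees Evs W1 W2 L1]]]]] := walk_split W Hz.
move: U Ues; rewrite Evs Ees -cat_cons !cat_uniq => /and3P[U1 Hd U2] /and3P[Ue1 Hde Ue2].
exists [set e in es1], [set e in es2]; split.
- by exists es1, vs1; split.
- exists es2, vs2; split => //; last by rewrite -L Evs last_cat L1.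
  rewrite /= U2 andbT; apply/negP => Hzv; move/hasP: Hd; apply; exists z => //.
  by rewrite -L1 mem_last.
- by apply/setP => e; rewrite !inE mem_cat.
- rewrite -setI_eq0; apply/eqP/setP => e; rewrite !inE; apply/negP => /andP[h1 h2].
  by move/hasP: Hde; apply; exists e.
Qed.

Lemma pb_sub P a b z : path_between P a b -> z \in vset P ->
  exists2 Q : {set E}, Q \subset P & path_between Q a z.
Proof.
case=> H Hz; have [P1 [P2 [H1 H2 EP _]]] := path_split H Hz.
  by exists P1; [rewrite EP subsetUl | left].
by exists P2; [rewrite EP subsetUr | right].
Qed.


Lemma last_in (y : V) t : t != [::] -> last y t \in t.
Proof. by case: t => //= a t _; exact: mem_last. Qed.

Definition cwalk x es vs :=
  [&& is_walk x es vs, uniq vs, uniq es, last x vs == x & 0 < size es].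

Lemma cwalk_rot1 x e es u vs : cwalk x (e :: es) (u :: vs) ->
  cwalk u (rcons es e) (rcons vs u).
Proof.
rewrite /cwalk walk_cons => /and5P[/andP[J W] Uv Ue /eqP L _].
have Hs := walk_size W; have L' : last u vs = x := L.
rewrite walk_rcons // W /= L' J !rcons_uniq last_rcons eqxx size_rcons.
by move: Uv Ue => /= -> ->.
Qed.

Lemma cwalk_rotn n x es vs : cwalk x es vs -> n < size vs ->
  exists es' vs', cwalk (nth x vs n) es' vs' /\ [set e in es'] = [set e in es].
Proof.
elim: n x es vs => [|n IH] x [|e es] [|u vs] //.
- move=> C _; exists (rcons es e), (rcons vs u); split; first by apply: (cwalk_rot1 C).
  by apply/setP => f; rewrite !inE mem_rcons.
- move=> C /= Hn; rewrite ltnS in Hn; have C1 := cwalk_rot1 C.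
  have Hn' : n < size (rcons vs u) by rewrite size_rcons ltnW.
  have [es' [vs' [C' Es]]] := IH _ _ _ C1 Hn'.
  exists es', vs'; split.
    by move: C'; rewrite nth_rcons Hn (set_nth_default x).
  by rewrite Es; apply/setP => f; rewrite !inE mem_rcons.
Qed.

Lemma cycle_at C z : is_cycle C -> z \in vset C ->
  exists es vs, cwalk z es vs /\ C = [set e in es].
Proof.
move=> [x [es [vs [W Hs /andP[Uv Ue] L ->]]]].
have Hne : es != [::] by apply/eqP => E0; move: Hs; rewrite E0.
rewrite (vset_walk _ W Hne) => Hz.
have Hvs : vs != [::] by apply/eqP => E0; move: (walk_size W) Hs; rewrite E0 => <-.
have Hz' : z \in vs.
  move: Hz; rewrite inE => /orP[/eqP->|//].
  by move: Hvs L; case: (vs) => [//|a t] _ /= <-; rewrite mem_last.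
have C0 : cwalk x es vs by rewrite /cwalk W Uv Ue L eqxx Hs.
have [es' [vs' [C' Es]]] := cwalk_rotn C0 (etrans (index_mem z vs) Hz').
by exists es', vs'; rewrite nth_index in C'.
Qed.

Definition degC (C : {set E}) := forall z, z \in vset C ->
  exists e1 e2, forall e, e \in C -> inc e z -> e = e1 \/ e = e2.

Lemma deg_cycle C : is_cycle C -> degC C.
Proof.
move=> HC z Hz; have [es [vs [Cw ->]]] := cycle_at HC Hz.
move: Cw; rewrite /cwalk => /and5P[W Uv Ue /eqP L Hs].
case: es W Ue Hs => [//|e1 es] W Ue _.
case/lastP: es W Ue => [|es e2] W Ue.
  by exists e1, e1 => e; rewrite !inE => /eqP ->; left.
exists e1, e2 => e; rewrite !inE => /orP[/eqP->|]; first by left.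
case: vs W Uv L => [//|u vs]; rewrite walk_cons => /andP[J W] Uv L.
have [vs' [b [Evs W' J']]] := walk_rconsE W.
move: L; rewrite Evs /= last_rcons => Eb; subst b.
move: Uv; rewrite Evs -rcons_cons rcons_uniq => /andP[Hz' _].
rewrite mem_rcons inE => /orP[/eqP->|He Hi]; first by right.
by have /hasP := inc_notin W' Hz'; case; exists e.
Qed.

Lemma follow C f fs gs s us ws : degC C ->
  is_walk s (f :: fs) us -> is_walk s (f :: gs) ws ->
  uniq (s :: us) -> uniq (s :: ws) -> uniq (f :: fs) -> uniq (f :: gs) ->
  last s us = last s ws -> {subset f :: fs <= C} -> {subset f :: gs <= C} ->
  fs = gs.
Proof.
move=> D; elim: fs f gs s us ws => [|f' fs IH] f [|g' gs] s [|u us] [|u' ws] //.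
- rewrite !walk_cons walk_nil => /andP[J /eqP->] /andP[J' W'].
  rewrite (joins_r J J') => _ /andP[_ /andP[Hn _]] _ _ /= Hl.
  have Hws : ws != [::] by move: (walk_size W'); case: (ws).
  by move: Hn; rewrite {1}Hl last_in.
- rewrite !walk_cons walk_nil => /andP[J W] /andP[J' /eqP Ew].
  rewrite Ew (joins_r J J') => /andP[_ /andP[Hn _]] _ _ _ /= Hl.
  have Hus : us != [::] by move: (walk_size W); case: (us).
  by move: Hn; rewrite -{1}Hl last_in.
- rewrite !walk_cons => /andP[J W] /andP[J' W'].
  rewrite -(joins_r J J') in W' *.
  move=> /andP[_ Uu] /andP[_ Uw] Uf Ug Hl Sf Sg.
  case: us W Uu Hl => [//|a us] W Uu Hl.
  case: ws W' Uw Hl => [//|a' ws] W' Uw Hl.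
  move: (W) (W'); rewrite !walk_cons => /andP[Ja _] /andP[Ja' _].
  have Hfu : inc f u by rewrite (joins_inc u J) eqxx orbT.
  have Hf'u : inc f' u by rewrite (joins_inc u Ja) eqxx.
  have Hg'u : inc g' u by rewrite (joins_inc u Ja') eqxx.
  have [e1 [e2 De]] := D u (vset_inc (Sf f (mem_head _ _)) Hfu).
  have Nf : f' != f by move: Uf => /= /andP[]; rewrite inE negb_or eq_sym => /andP[].
  have Ng : g' != f by move: Ug => /= /andP[]; rewrite inE negb_or eq_sym => /andP[].
  have HfC : f \in C by apply: Sf; exact: mem_head.
  have Hf'C : f' \in C by apply: Sf; rewrite !inE eqxx orbT.
  have Hg'C : g' \in C by apply: Sg; rewrite !inE eqxx orbT.
  have Eq : f' = g'.
    case: (De f HfC Hfu) => E1; case: (De f' Hf'C Hf'u) => E2;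
    case: (De g' Hg'C Hg'u) => E3; move: Nf Ng => /eqP ? /eqP ?; congruence.
  subst g'; congr (_ :: _).
  apply: (IH f' gs u (a :: us) (a' :: ws)) => //.
  + by case/andP: Uf.
  + by case/andP: Ug.
  + by move=> e He; apply: Sf; rewrite inE He orbT.
  + by move=> e He; apply: Sg; rewrite inE He orbT.
Qed.


Lemma uniq_from (C A B X : {set E}) x y : degC C -> x != y -> path_from A x y -> path_from B y x ->
  C = A :|: B -> X \subset C -> path_from X x y -> X = A \/ X = B.
Proof.
move=> D Hxy [es1 [vs1 [W1 U1 Ue1 L1 EA]]] [es2 [vs2 [W2 U2 Ue2 L2 EB]]] EC
  /subsetP SX [fs [us [W U Uf L EX]]].
case: fs W Uf EX => [|f fs] W Uf EX.
  by move: W Hxy; rewrite walk_nil => /eqP Hu; rewrite -L Hu eqxx.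
have Hfx : inc f x.
  by case: us W {U L} => [//|u us]; rewrite walk_cons => /andP[J _]; rewrite (joins_inc x J) eqxx.
have HfX : f \in X by rewrite EX inE mem_head.
have SfC : {subset f :: fs <= C} by move=> e He; apply: SX; rewrite EX inE.
have Hf0 := SX f HfX; rewrite EC in_setU EA EB !inE in Hf0; case/orP: Hf0 => Hf.
- case: es1 W1 Ue1 EA Hf => [//|a0 es1] W1 Ue1 EA Hf.
  have Ef := inc_start W1 U1 Hf Hfx; subst a0.
  have SaC : {subset f :: es1 <= C} by move=> e He; rewrite EC in_setU EA inE He.
  have := follow D W W1 U U1 Uf Ue1 (etrans L (esym L1)) SfC SaC.
  by move=> Efs; left; rewrite EX EA Efs.
- case/lastP: es2 W2 Ue2 EB Hf => [//|es2 bl] W2 Ue2 EB Hf.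
  have Hfx' : inc f (last y vs2) by rewrite L2.
  have Ef := inc_end W2 U2 Hf Hfx'; subst bl.
  case: (boolP dir) => d.
    by have := dir_first_last d W W2 U2 L2; rewrite eqxx.
  have W' := walk_rev d W2; rewrite rev_rcons L2 in W'.
  have U' : uniq (x :: rev (belast y vs2)) by rewrite -L2 uniq_rev_walk.
  have Ue' : uniq (f :: rev es2) by rewrite -rev_rcons rev_uniq.
  have L' : last x us = last x (rev (belast y vs2)) by rewrite L -{1}L2 last_rev_belast.
  have SbC : {subset f :: rev es2 <= C}.
    by move=> e; rewrite EC in_setU EB inE mem_rcons !inE mem_rev => ->; rewrite orbT.
  have := follow D W W' U U' Uf Ue' L' SfC SbC.
  move=> Efs; right; rewrite EX EB Efs; apply/setP => e.
  by rewrite !inE mem_rcons !inE mem_rev.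
Qed.


Lemma core C x y : is_cycle C -> x != y -> x \in vset C -> y \in vset C ->
  exists A B, [/\ A :|: B = C, [disjoint A & B], path_from A x y, path_from B y x &
    forall X : {set E}, X \subset C -> path_between X x y -> X = A \/ X = B].
Proof.
move=> HC Hxy Hx Hy; have D := deg_cycle HC.
have [es [vs [Cw EC]]] := cycle_at HC Hx.
move: Cw => /and5P[W Uv Ue /eqP L Hs].
have Hne : es != [::] by apply/eqP => E0; move: Hs; rewrite E0.
have Hy' : y \in x :: vs by rewrite -(vset_walk _ W Hne) -EC.
have [es1 [es2 [vs1 [vs2 [Ees Evs W1 W2 L1]]]]] := walk_split W Hy'.
have Hvs1 : vs1 != [::] by apply/eqP => E0; move: L1 Hxy; rewrite E0 /= => ->; rewrite eqxx.
have L2 : last y vs2 = x by rewrite -L1 -last_cat -Evs.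
have Hvs2 : vs2 != [::] by apply/eqP => E0; move: L2 Hxy; rewrite E0 /= => ->; rewrite eqxx.
move: Uv Ue; rewrite Evs Ees !cat_uniq => /and3P[U1 Hd U2] /and3P[Ue1 Hde Ue2].
have Hx2 : x \in vs2 by rewrite -{1}L2 last_in.
have Hy1 : y \in vs1 by rewrite -{1}L1 last_in.
have PA : path_from [set e in es1] x y.
  exists es1, vs1; split => //; rewrite /= U1 andbT; apply/negP => Hx1.
  by move/hasP: Hd; apply; exists x.
have PB : path_from [set e in es2] y x.
  exists es2, vs2; split => //; rewrite /= U2 andbT; apply/negP => Hy2.
  by move/hasP: Hd; apply; exists y.
have EU : [set e in es1] :|: [set e in es2] = C.
  by rewrite EC Ees; apply/setP => e; rewrite !inE mem_cat.
exists [set e in es1], [set e in es2]; split => //.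
- rewrite -setI_eq0; apply/eqP/setP => e; rewrite !inE; apply/negP => /andP[h1 h2].
  by move/hasP: Hde; apply; exists e.
- move=> X SX [] HX; first exact: (uniq_from D Hxy PA PB (esym EU) SX HX).
  have EU' : C = [set e in es2] :|: [set e in es1] by rewrite setUC EU.
  have Hyx : y != x by rewrite eq_sym.
  by case: (uniq_from D Hyx PB PA EU' SX HX); [right|left].
Qed.

Lemma compl_arcs (A B C : {set E}) : A :|: B = C -> [disjoint A & B] ->
  C :\: A = B /\ C :\: B = A.
Proof.
move=> <- Hd; split; apply/setP => e; rewrite !inE;
  case HA: (e \in A); case HB: (e \in B) => //=; by rewrite (disjointFr Hd HA) in HB.
Qed.

Lemma arcs_compl (C X : {set E}) x y : is_cycle C -> X \subset C -> path_between X x y -> x != y ->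
  path_between (C :\: X) x y.
Proof.
move=> HC SX HX Hxy; have [Hx Hy] := pb_ends HX Hxy.
have Sv := subsetP (vset_mono SX).
have [A [B [EU Hd PA PB U]]] := core HC Hxy (Sv _ Hx) (Sv _ Hy).
have [E1 E2] := compl_arcs EU Hd.
by case: (U X SX HX) => ->; [rewrite E1; right | rewrite E2; left].
Qed.

Lemma arcs_uniq (C X Y : {set E}) x y : is_cycle C -> X \subset C -> Y \subset C ->
  path_between X x y -> path_between Y x y -> x != y -> X = Y \/ X = C :\: Y.
Proof.
move=> HC SX SY HX HY Hxy; have [Hx Hy] := pb_ends HX Hxy.
have Sv := subsetP (vset_mono SX).
have [A [B [EU Hd PA PB U]]] := core HC Hxy (Sv _ Hx) (Sv _ Hy).
have [E1 E2] := compl_arcs EU Hd.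
by case: (U X SX HX) => ->; case: (U Y SY HY) => ->; rewrite ?E1 ?E2; auto.
Qed.


Lemma pb_drop (Q : {set E}) u w e v : path_between Q u w -> e \in Q -> joins e v u ->
  v != u -> path_between (Q :\ e) v w.
Proof.
have Hinc : joins e v u -> inc e u by move=> J; rewrite (joins_inc u J) eqxx orbT.
case=> [[qs [qus [W U Uq L EQ]]] | [qs [qus [W U Uq L EQ]]]] He J /eqP Hvu.
- rewrite EQ inE in He; case: qs W Uq EQ He => [//|q0 qs] W Uq EQ He.
  have Eq := inc_start W U He (Hinc J); subst q0.
  case: qus W U L => [//|u1 qus]; rewrite walk_cons => /andP[J1 W] U L.
  have Eu1 : u1 = v.
    by move: J J1 => /joinsE [[h1 h2]|[h1 h2]] /joinsE [[h3 h4]|[h3 h4]]; congruence.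
  subst u1; left; exists qs, qus; split => //.
  + by case/andP: U.
  + by case/andP: Uq.
  + rewrite EQ; apply/setP => x; rewrite !inE; case: (x =P e) => [->|] //=.
    by case/andP: Uq => /negbTE ->.
- rewrite EQ inE in He; case/lastP: qs W Uq EQ He => [//|qs ql] W Uq EQ He.
  have Hu : inc e (last w qus) by rewrite L; exact: Hinc.
  have Eq := inc_end W U He Hu; subst ql.
  have [qus' [u0 [Equs W' J']]] := walk_rconsE W.
  move: L; rewrite Equs last_rcons => Eu0; subst u0.
  have Ep := joins_l J' J.
  right; exists qs, qus'; split => //.
  + by move: U; rewrite Equs -rcons_cons rcons_uniq => /andP[].
  + by move: Uq; rewrite rcons_uniq => /andP[].
  + rewrite EQ; apply/setP => x; rewrite !inE mem_rcons inE; case: (x =P e) => [->|] //=.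
    by move: Uq; rewrite rcons_uniq => /andP[/negbTE ->].
Qed.

Lemma first_hit (p : pred V) x es vs : is_walk x es vs -> has p vs ->
  exists es1 es2 mid b vs2, [/\ es = es1 ++ es2, vs = rcons mid b ++ vs2,
    is_walk x es1 (rcons mid b), p b & ~~ has p mid].
Proof.
elim: es x vs => [|e es IH] x [|u vs] //.
rewrite walk_cons => /andP[J W] /= Hh.
case Hu: (p u).
  exists [:: e], es, [::], u, vs; split => //.
  by rewrite /= walk_cons J.
move: Hh; rewrite Hu /= => Hh.
have [es1 [es2 [mid [b [vs2 [-> -> W1 Hb Hm]]]]]] := IH _ _ W Hh.
exists (e :: es1), es2, (u :: mid), b, vs2; split => //.
- by rewrite /= walk_cons J.
- by rewrite /= Hu.
Qed.


Lemma mainL (Fam : {set {set E}}) :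
  cycle_family dir src tgt Fam -> uncrossable dir src tgt Fam ->
  forall m k C1 C2 v es vs, #|C2 :|: [set e in es]| < m -> size es < k ->
  C1 \in Fam -> C2 \in Fam -> is_walk v es vs -> uniq (v :: vs) -> uniq es ->
  [set e in es] \subset C1 -> v != last v vs -> v \in vset C2 -> last v vs \in vset C2 ->
  exists2 X2 : {set E}, X2 \subset C2 /\ path_between X2 v (last v vs) &
    exists2 D, D \in Fam & D \subset [set e in es] :|: X2.
Proof.
move=> HF HU; elim=> [//|m IHm]; elim=> [//|k IHk] C1 C2 v es vs Hm Hk H1 H2 W U Ue S1 Hvw Hv Hw.
have HC2 := HF _ H2.
case: es W Ue S1 Hm Hk => [|e es'] W Ue S1 Hm Hk.
  by move: W Hvw; rewrite walk_nil => /eqP->; rewrite eqxx.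
case: vs W U Hvw Hw => [//|u vs'] W U Hvw Hw.
move: (W); rewrite walk_cons => /andP[J W'].
have Hev : inc e v by rewrite (joins_inc v J) eqxx.
have PX1 : path_from [set e0 in e :: es'] v (last v (u :: vs')) by exists (e :: es'), (u :: vs').
case: (boolP (e \in C2)) => He.
-
  case: es' W W' Ue S1 Hm Hk PX1 => [|e' es''] W W' Ue S1 Hm Hk PX1.
    move: W'; rewrite walk_nil => /eqP Evs; subst vs'.
    have SX : [set e0 in [:: e]] \subset C2 by apply/subsetP => x; rewrite inE mem_seq1 => /eqP->.
    exists (C2 :\: [set e0 in [:: e]]); first by split; [exact: subsetDl | exact: arcs_compl HC2 SX (or_introl PX1) Hvw].
    exists C2 => //; apply/subsetP => x Hx; rewrite in_setU in_setD Hx andbT.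
    by case: (x \in _).
  set es1 := e' :: es''.
  have Hvs' : vs' != [::] by move: (walk_size W'); case: (vs').
  have Hvu : v != u by move: U => /= /andP[]; rewrite inE negb_or => /andP[].
  have Huw : u != last u vs'.
    apply/eqP => Eu; move: U => /= /andP[_ /andP[]]; by rewrite {1}Eu last_in.
  have Hu : u \in vset C2 by apply: (vset_inc He); rewrite (joins_inc u J) eqxx orbT.
  have Ssub : [set e0 in es1] \subset [set e0 in e :: es1].
    by apply/subsetP => x; rewrite !inE => ->; rewrite orbT.
  have U' : uniq (u :: vs') by case/andP: U.
  have Ue' : uniq es1 by case/andP: Ue.
  have [X2' [S2' P2'] [D' HD' SD']] := IHk C1 C2 u es1 vs'
    (leq_ltn_trans (subset_leq_card (setUS C2 Ssub)) Hm) Hk H1 H2 W'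
    U' Ue' (subset_trans Ssub S1) Huw Hu Hw.
  case: (boolP (e \in X2')) => HeX.
  + exists (X2' :\ e).
      by split; [exact: subset_trans (subsetDl _ _) S2' | exact: pb_drop P2' HeX J Hvu].
    exists D' => //; apply: (subset_trans SD'); apply/subsetP => x; rewrite !inE.
    by case: (x =P e) => [->|_] /=; rewrite ?eqxx //; case/orP => ->; rewrite ?orbT.
  + have PQ := arcs_compl HC2 S2' P2' Huw.
    have HeQ : e \in C2 :\: X2' by rewrite in_setD He HeX.
    have PQ' := pb_drop PQ HeQ J Hvu.
    have SQ' : (C2 :\: X2') :\ e \subset C2 by apply: subset_trans (subsetDl _ _) (subsetDl _ _).
    exists (C2 :\: ((C2 :\: X2') :\ e)).
      by split; [exact: subsetDl | exact: arcs_compl HC2 SQ' PQ' Hvw].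
    exists D' => //; apply: (subset_trans SD'); apply/subsetP => x; rewrite !inE.
    case/orP => [->|Hx]; first by rewrite orbT.
    by rewrite Hx (subsetP S2' _ Hx) /= andbF orbT.
- set w := last v (u :: vs').
  set X1 := [set e0 in e :: es'].
  have Hhas : has (fun z => z \in vset C2) (u :: vs').
    by apply/hasP; exists w => //; exact: last_in.
  have [es1 [es2 [mid [b [vs2 [Ees Evs W1 Hb Hmid]]]]]] := first_hit W Hhas.
  have U1 : uniq (v :: rcons mid b).
    by move: U; rewrite Evs -cat_cons cat_uniq => /andP[].
  have Ue1 : uniq es1 by move: Ue; rewrite Ees cat_uniq => /andP[].
  have Hes1 : es1 != [::].
    by apply/eqP => E0; move: (walk_size W1); rewrite E0 size_rcons.
  have PS : path_from [set e0 in es1] v b.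
    by exists es1, (rcons mid b); split => //; rewrite last_rcons.
  have Hvb : v != b.
    by apply/eqP => Evb; move: U1; rewrite /= {1}Evb mem_rcons mem_head.
  have SS : [set e0 in es1] \subset X1.
    by apply/subsetP => x; rewrite /X1 !inE => h; rewrite -in_cons Ees mem_cat h.
  have HvS : vset [set e0 in es1] :&: vset C2 = [set v; b].
    apply/setP => z; rewrite in_setI (vset_walk _ W1 Hes1) in_set2 in_cons mem_rcons in_cons.
    case: (z =P v) => [->|_] /=; first by rewrite Hv.
    case: (z =P b) => [->|_] /=; first by rewrite Hb.
    case Hz: (z \in mid) => //=; apply/negbTE.
    by move/hasPn: Hmid; apply.
  have [P [SP PP Hdisj HPS _]] := HU C2 C1 H2 H1 v b [set e0 in es1] Hvb
    (subset_trans SS S1) (or_introl PS) HvS.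
  set S := [set e0 in es1] in SS PS HvS Hdisj HPS.
  case: (b =P w) => Hbw.
    exists P; first by split => //; rewrite -Hbw; exact: PP.
    exists (P :|: S) => //; apply/subsetP => x; rewrite !in_setU.
    by case/orP => Hx; rewrite ?Hx ?orbT // (subsetP SS _ Hx).
  have PP' := arcs_compl HC2 SP PP Hvb.
  case: (boolP (w \in vset P)) => HwP.
  + have [Pa SPa PPa] := pb_sub PP HwP.
    have H3 : P :|: S \in Fam by [].
    have Hprop : (P :|: S) :|: X1 \proper C2 :|: X1.
      apply/properP; split.
        apply/subsetP => x; rewrite !in_setU; case/orP; first case/orP.
        * by move=> Hx; rewrite (subsetP SP _ Hx).
        * by move=> Hx; rewrite (subsetP SS _ Hx) orbT.
        * by move=> ->; rewrite orbT.
      have [Hv' _] := pb_ends PP' Hvb.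
      move: Hv'; rewrite in_vset => /existsP[f /andP[Hf Hfv]].
      move: Hf; rewrite in_setD => /andP[HfP HfC].
      exists f; first by rewrite in_setU HfC.
      rewrite !in_setU (negbTE HfP) /=; apply/negP => HfX.
      have HfX1 : f \in X1 by case/orP: HfX => // /(subsetP SS).
      have HfX' : f \in e :: es' by move: HfX1; rewrite /X1 inE.
      have Hfe := inc_start W U HfX' Hfv; subst f.
      by move: HfC; rewrite (negbTE He).
    have Hm' : #|(P :|: S) :|: X1| < m.
      by move: (proper_card Hprop) Hm; rewrite ltnS; apply: leq_trans.
    have HvC3 : v \in vset (P :|: S).
      by apply: (subsetP (vset_mono (subsetUr P S))); case: (path_ends PS Hvb).
    have HwC3 : w \in vset (P :|: S) by apply: (subsetP (vset_mono (subsetUl P S))).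
    have [X3 [S3 P3] [D HD SD]] := IHm (size (e :: es')).+1 C1 (P :|: S) v (e :: es') (u :: vs')
      Hm' (ltnSn _) H1 H3 W U Ue S1 Hvw HvC3 HwC3.
    have SPa3 : Pa \subset P :|: S by apply: subset_trans SPa (subsetUl _ _).
    have SPa2 : Pa \subset C2 by apply: subset_trans SPa SP.
    case: (arcs_uniq (HF _ H3) S3 SPa3 P3 PPa Hvw) => EX3; subst X3.
      by exists Pa => //; exists D.
    exists (C2 :\: Pa); first by split; [exact: subsetDl | exact: arcs_compl HC2 SPa2 PPa Hvw].
    exists D => //; apply: (subset_trans SD); apply/subsetP => x.
    rewrite !in_setU !in_setD !in_setU; case/orP => [->//|/andP[HxPa /orP[Hx|Hx]]].
      by rewrite HxPa (subsetP SP _ Hx) orbT.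
    by rewrite (subsetP SS _ Hx).
  + have EC2 : C2 = P :|: (C2 :\: P).
      apply/setP => x; rewrite in_setU in_setD.
      by case Hx: (x \in P); rewrite ?(subsetP SP _ Hx) //= andbT.
    have HwP' : w \in vset (C2 :\: P).
      by move: Hw; rewrite -/w {1}EC2 vsetU in_setU (negbTE HwP).
    have [Qa SQa PQa] := pb_sub PP' HwP'.
    have SQa2 : Qa \subset C2 by apply: subset_trans SQa (subsetDl _ _).
    exists (C2 :\: Qa); first by split; [exact: subsetDl | exact: arcs_compl HC2 SQa2 PQa Hvw].
    exists (P :|: S) => //; apply/subsetP => x; rewrite !in_setU in_setD.
    case/orP => Hx; last by rewrite (subsetP SS _ Hx).
    rewrite (subsetP SP _ Hx) andbT; apply/orP; right; apply/negP => HxQ.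
    by move: (subsetP SQa _ HxQ); rewrite in_setD Hx.
Qed.


Lemma L2 (Fam : {set {set E}}) (C1 C2 X1 : {set E}) v w :
  cycle_family dir src tgt Fam -> uncrossable dir src tgt Fam ->
  C1 \in Fam -> C2 \in Fam -> X1 \subset C1 -> path_between X1 v w -> v != w ->
  v \in vset C2 -> w \in vset C2 ->
  exists2 X2 : {set E}, X2 \subset C2 /\ path_between X2 v w &
    exists2 D, D \in Fam & D \subset X1 :|: X2.
Proof.
move=> HF HU H1 H2 S1 [[es [vs [W U Ue L EX]]] | [es [vs [W U Ue L EX]]]] Hvw Hv Hw.
- subst X1 w.
  exact: (mainL HF HU (ltnSn _) (ltnSn _) H1 H2 W U Ue S1 Hvw Hv Hw).
- subst X1 v.
  have Hwv : w != last w vs by rewrite eq_sym.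
  have [X2 [S2 P2] HD] := mainL HF HU (ltnSn _) (ltnSn _) H1 H2 W U Ue S1 Hwv Hw Hv.
  by exists X2 => //; split => //; apply: pb_sym.
Qed.

Lemma strong (Fam : {set {set E}}) :
  cycle_family dir src tgt Fam -> uncrossable dir src tgt Fam ->
  strongly_uncrossable dir src tgt Fam.
Proof.
move=> HF HU C1 C2 H1 H2 v w Hvw Hv1 Hw1 Hv2 Hw2.
have [A1 [B1 [EU1 Hd1 PA1 PB1 U1]]] := core (HF _ H1) Hvw Hv1 Hw1.
have [A2 [B2 [EU2 Hd2 PA2 PB2 U2]]] := core (HF _ H2) Hvw Hv2 Hw2.
have [EA1 EB1] := compl_arcs EU1 Hd1.
have [EA2 EB2] := compl_arcs EU2 Hd2.
pose good (X Y : {set E}) := exists2 D, D \in Fam & D \subset X :|: Y.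
have gl : forall X1 : {set E}, X1 \subset C1 -> path_between X1 v w -> good X1 A2 \/ good X1 B2.
  move=> X1 S1 P1; have [X2 [S2 P2] HD] := L2 HF HU H1 H2 S1 P1 Hvw Hv2 Hw2.
  by case: (U2 X2 S2 P2) => EX; subst X2; [left|right].
have gr : forall X2 : {set E}, X2 \subset C2 -> path_between X2 v w -> good A1 X2 \/ good B1 X2.
  move=> X2 S2 P2; have [X1 [S1 P1] [D HD SD]] := L2 HF HU H2 H1 S2 P2 Hvw Hv1 Hw1.
  by case: (U1 X1 S1 P1) => EX; subst X1; [left|right]; exists D; rewrite // setUC.
have SA1 : A1 \subset C1 by rewrite -EU1 subsetUl.
have SB1 : B1 \subset C1 by rewrite -EU1 subsetUr.
have SA2 : A2 \subset C2 by rewrite -EU2 subsetUl.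
have SB2 : B2 \subset C2 by rewrite -EU2 subsetUr.
have pA1 : path_between A1 v w by left.
have pB1 : path_between B1 v w by right.
have pA2 : path_between A2 v w by left.
have pB2 : path_between B2 v w by right.
have Hor : (good A1 A2 /\ good B1 B2) \/ (good A1 B2 /\ good B1 A2).
  case: (gl _ SA1 pA1) => gA; case: (gl _ SB1 pB1) => gB;
  case: (gr _ SA2 pA2) => gA'; case: (gr _ SB2 pB2) => gB'; tauto.
case: Hor => [[gAA gBB]|[gAB gBA]].
- by exists A1, A2; split => //; rewrite EA1 EA2.
- by exists A1, B2; split => //; rewrite EA1 EB2.
Qed.

End H.

Theorem theorem4p4 (V E : finType) (dir : bool) (src tgt : E -> V)
    (Fam : {set {set E}}) :
  cycle_family dir src tgt Fam ->
  uncrossable dir src tgt Fam ->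
  strongly_uncrossable dir src tgt Fam.
Proof. exact: strong. Qed.
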